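(* Every set strongly star Lindelöf space of cardinality less than $\mathfrak d$ is set strongly star Menger.
   Context: For a family $\mathcal U$ of subsets of $X$ and $A\subseteq X$, $st(A,\mathcal U)=\bigcup\{U\in\mathcal U: U\cap A\neq\emptyset\}$. $X$ is set strongly star Lindelöf if for every nonempty $A\subseteq X$ and every family $\mathcal U$ of open subsets with $\overline A\subseteq\bigcup\mathcal U$ there is a countable $F\subseteq\overline A$ with $A\subseteq st(F,\mathcal U)$. $X$ is set strongly star Menger if for every nonempty $A\subseteq X$ and every sequence $(\mathcal U_n:n\in\omega)$ of families of open sets with $\overline A\subseteq\bigcup\mathcal U_n$ for all $n$, there are finite $F_n\subseteq\overline A$ with $A\subseteq\bigcup_n st(F_n,\mathcal U_n)$. $\mathfrak d$ is the minimal cardinality of a cofinal subset of $(\omega^\omega,\leq^* )$. *)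

(* Defs.v *)
From HB Require Import structures.
From mathcomp Require Import all_boot all_order.
From mathcomp Require Import boolp classical_sets functions cardinality topology.
Set Implicit Arguments. Unset Strict Implicit. Unset Printing Implicit Defensive.
Local Open Scope classical_set_scope.
Local Open Scope card_scope.

Definition star {X : Type} (A : set X) (U : set (set X)) : set X :=
  \bigcup_(u in [set u | U u /\ u `&` A !=set0]) u.

Definition open_family {X : topologicalType} (U : set (set X)) : Prop :=
  forall u, U u -> open u.

Definition set_strongly_star_Lindelof (X : topologicalType) : Prop :=
  forall (A : set X) (U : set (set X)), A !=set0 -> open_family U ->
    closure A `<=` \bigcup_(u in U) u ->
    exists F : set X, [/\ F `<=` closure A, countable F & A `<=` star F U].

Definition set_strongly_star_Menger (X : topologicalType) : Prop :=
  forall (A : set X) (U : nat -> set (set X)), A !=set0 ->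
    (forall n, open_family (U n)) ->
    (forall n, closure A `<=` \bigcup_(u in U n) u) ->
    exists F : nat -> set X,
      [/\ forall n, F n `<=` closure A, forall n, finite_set (F n) &
          A `<=` \bigcup_n star (F n) (U n)].

Definition le_star (f g : nat -> nat) : Prop :=
  exists n0, forall n, (n0 <= n)%N -> (f n <= g n)%N.

Definition cofinal_family (D : set (nat -> nat)) : Prop :=
  forall f, exists2 g, D g & le_star f g.

(* |X| < d, where d = min{ |D| : D cofinal }:
   no cofinal family has cardinality <= |X| *)
Definition card_lt_dfrak (X : Type) : Prop :=
  forall D : set (nat -> nat), cofinal_family D -> ~ (D #<= [set: X]).

(* Main.v *)
Require Import Defs.
From HB Require Import structures.
From mathcomp Require Import all_boot all_order.
From mathcomp Require Import boolp classical_sets functions cardinality topology.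
Local Open Scope classical_set_scope.

Theorem proposition2p6 (X : topologicalType) :
  set_strongly_star_Lindelof X -> card_lt_dfrak X -> set_strongly_star_Menger X.
Proof.
move=> HL Hd A U A0 Uo Ucov.
have He : forall n, exists e : nat -> X,
    (forall k, closure A (e k)) /\ A `<=` star (range e) (U n).
  move=> n; have [F [FA Fc AF]] := HL A (U n) A0 (Uo n) (Ucov n).
  case/pfcard_geP: Fc => [F0|[s]].
    case: A0 => a Aa; have := AF a Aa; rewrite F0.
    by case=> u [_ [x [_ []]]].
  exists s; split; first by move=> k; apply: FA; apply: (@funS _ _ _ _ s).
  move=> a Aa; case: (AF a Aa) => u [Uu [x [ux Fx]]] ua.
  have [k _ skx] := (@surj _ _ _ _ s) x Fx.
  exists u => //; split => //; exists x; split => //; by exists k.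
have [e eP] := choice He.
have Hphi : forall a n, exists k, A a -> star [set e n k] (U n) a.
  move=> a n; have [Aa|nAa] := pselect (A a); last by exists 0.
  have [_ /(_ a Aa)] := eP n; case=> u [Uu [x [ux [k _ ekx]]]] ua.
  by exists k => _; exists u => //; split => //; exists x; split.
have Hphi2 : forall a, exists f : nat -> nat, forall n, A a -> star [set e n (f n)] (U n) a.
  by move=> a; case: (choice (Hphi a)) => f ?; exists f.
have [phi phiP] := choice Hphi2.
have : ~ cofinal_family (range phi).
  move=> cof; apply: (Hd _ cof); apply: card_le_trans (card_image_le _ _) _; exact: card_leT.
rewrite /cofinal_family => /existsNP [g] /forall2NP gP.
exists (fun n => e n @` `I_(g n).+1); split.
- by move=> n _ [k _ <-]; case: (eP n).
- by move=> n; apply: finite_image.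
move=> a Aa.
case: (gP (phi a)) => [[]|]; first by exists a.
move=> /forallNP /(_ 0) /existsNP [n] /not_implyP [_ /negP].
rewrite -ltnNge => lt.
exists n => //.
case: (phiP a n Aa) => u [Uu [x [ux /= xE]]] ua; rewrite xE in ux.
exists u => //; split => //; exists (e n (phi a n)); split => //.
by exists (phi a n) => //=; exact: ltnW.
Qed.
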